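(* For every $n$, the quotient lattice $S_n/\mathcal{H}(\{3412,2413\})_n$ is isomorphic to the subposet of the weak order on $S_n$ induced by the twisted Baxter permutations.
   Context: $S_n$: permutations of $[n]$ in one-line notation with the right weak order (inclusion of sets of inverted value pairs), a lattice. A permutation $x$ is a twisted Baxter permutation if (i) in every occurrence of the pattern 2413 in $x$, the entries playing the roles of ''4'' and ''1'' are not adjacent in $x$, and (ii) in every occurrence of 3412, the ''4'' and ''1'' are not adjacent. (Pattern $y\in S_k$ occurs in $x$ if there are $i_1<\dots<i_k$ with $x_{i_p}<x_{i_q}\iff y_p<y_q$.) Join-irreducibles of $S_n$ are permutations with exactly one descent; $\gamma_*$ is the unique element they cover. A congruence contracts $\gamma$ if $\gamma\equiv\gamma_*$. $u\times v=u_1\cdots u_p(p+v_1)\cdots(p+v_q)$; $\mathrm{st}(a_1..a_k)$ is the $u\in S_k$ with $u_i<u_j\iff a_i<a_j$. A family $\{\Theta_n\}_{n\ge0}$ of lattice congruences on $S_n$ is translational if $u\times v\equiv u'\times v'$ mod $\Theta_{p+q}$ iff $u\equiv u'$ mod $\Theta_p$ and $v\equiv v'$ mod $\Theta_q$; insertional if for every $p$-subset $Q\subseteq[p+q]$, with $\varphi_Q(u,v)$ the unique $x\in S_{p+q}$ with $\{x_1..x_p\}=Q$, $\mathrm{st}(x_1..x_p)=u$, $\mathrm{st}(x_{p+1}..x_{p+q})=v$, we have $u\equiv u',v\equiv v'\Rightarrow\varphi_Q(u,v)\equiv\varphi_Q(u',v')$; an $\mathcal{H}$-family if both. For a set $C$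 of join-irreducibles, $\{\mathcal{H}(C)_n\}$ is the smallest $\mathcal{H}$-family contracting every element of $C$. The quotient $L/\Theta$ is the set of classes with $[a]\le[b]$ iff some $x\in[a],y\in[b]$ have $x\le y$. *)

(* Defs.v *)
From mathcomp Require Import all_boot all_order all_fingroup.
From Stdlib Require Lists.List.
Set Implicit Arguments. Unset Strict Implicit. Unset Printing Implicit Defensive.

(* Permutations of [n] are 'S_n = {perm 'I_n}; the one-line notation of x is
   x_i = x i (values and positions are 0-indexed). *)

Definition inv_set n (x : 'S_n) : {set 'I_n * 'I_n} :=
  [set ab : 'I_n * 'I_n | (ab.1 < ab.2)%N && ((x^-1)%g ab.2 < (x^-1)%g ab.1)%N].

Definition weak_le n (x y : 'S_n) : Prop := inv_set x \subset inv_set y.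

Definition weak_lt n (x y : 'S_n) : Prop := weak_le x y /\ x <> y.

Definition covers n (g x : 'S_n) : Prop :=
  weak_lt g x /\ forall z, weak_le g z -> weak_le z x -> z = g \/ z = x.

Definition is_join n (x y j : 'S_n) : Prop :=
  [/\ weak_le x j, weak_le y j & forall w, weak_le x w -> weak_le y w -> weak_le j w].

Definition is_meet n (x y m : 'S_n) : Prop :=
  [/\ weak_le m x, weak_le m y & forall w, weak_le w x -> weak_le w y -> weak_le w m].

Definition lattice_congruence n (R : 'S_n -> 'S_n -> Prop) : Prop :=
  [/\ (forall x, R x x), (forall x y, R x y -> R y x),
      (forall x y z, R x y -> R y z -> R x z),
      (forall x y z j j', R x y -> is_join x z j -> is_join y z j' -> R j j')
    & (forall x y z m m', R x y -> is_meet x z m -> is_meet y z m' -> R m m')].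

(* a congruence contracts the join-irreducible g when g == g_* *)
Definition contracts n (R : 'S_n -> 'S_n -> Prop) (g : 'S_n) : Prop :=
  exists gs, covers gs g /\ R g gs.

Definition family := forall n, 'S_n -> 'S_n -> Prop.

(* u x v = u_1 .. u_p (p+v_1) .. (p+v_q) *)
Definition dsum_fun p q (u : 'S_p) (v : 'S_q) (i : 'I_(p + q)) : 'I_(p + q) :=
  unsplit (match split i with inl j => inl (u j) | inr k => inr (v k) end).

Lemma dsum_inj p q (u : 'S_p) (v : 'S_q) : injective (dsum_fun u v).
Proof.
move=> i j; rewrite /dsum_fun => /(can_inj unsplitK) => E.
apply: (can_inj splitK).
by case: (split i) (split j) E => [a|a] [b|b] // [/perm_inj->].
Qed.

Definition dsum p q (u : 'S_p) (v : 'S_q) : 'S_(p + q) := perm (@dsum_inj p q u v).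

(* x = phi_Q(u,v): {x_1..x_p} = Q, st(x_1..x_p) = u, st(x_{p+1}..x_{p+q}) = v *)
Definition is_phi p q (Q : {set 'I_(p + q)}) (u : 'S_p) (v : 'S_q)
  (x : 'S_(p + q)) : Prop :=
  [/\ forall i : 'I_p, x (lshift q i) \in Q,
      forall i j : 'I_p, (x (lshift q i) < x (lshift q j))%N = (u i < u j)%N
    & forall i j : 'I_q, (x (rshift p i) < x (rshift p j))%N = (v i < v j)%N].

Definition translational (T : family) : Prop :=
  forall p q (u u' : 'S_p) (v v' : 'S_q),
    T (p + q) (dsum u v) (dsum u' v') <-> T p u u' /\ T q v v'.

Definition insertional (T : family) : Prop :=
  forall p q (Q : {set 'I_(p + q)}) (u u' : 'S_p) (v v' : 'S_q) (x x' : 'S_(p + q)),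
    #|Q| = p -> is_phi Q u v x -> is_phi Q u' v' x' ->
    T p u u' -> T q v v' -> T (p + q) x x'.

Definition H_family (T : family) : Prop :=
  [/\ forall n, lattice_congruence (T n), translational T & insertional T].

Definition HC (C : seq {k : nat & 'S_k}) : family :=
  fun n x y => forall T : family, H_family T ->
    (forall c, Stdlib.Lists.List.In c C -> contracts (T (projT1 c)) (projT2 c)) -> T n x y.
Arguments HC : clear implicits.

Definition perm_of_seq n (s : seq nat) : 'S_n :=
  odflt 1%g [pick x : 'S_n | [forall i : 'I_n, val (x i) == nth 0%N s i]].

Definition p3412 : 'S_4 := perm_of_seq 4 [:: 2; 3; 0; 1]%N.
Definition p2413 : 'S_4 := perm_of_seq 4 [:: 1; 3; 0; 2]%N.

Definition occurrence k n (y : 'S_k) (x : 'S_n) (f : 'I_k -> 'I_n) : Prop :=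
  (forall a b : 'I_k, (a < b)%N -> (f a < f b)%N) /\
  (forall a b : 'I_k, (x (f a) < x (f b))%N = (y a < y b)%N).

(* in every occurrence of y (of size 4), the entries playing the roles of
   "4" (value 3) and "1" (value 0) are not adjacent in x *)
Definition four_one_nonadjacent n (y : 'S_4) (x : 'S_n) : Prop :=
  forall f : 'I_4 -> 'I_n, occurrence y x f ->
    let i4 := f ((y^-1)%g (inord 3)) in
    let i1 := f ((y^-1)%g (inord 0)) in
    i1 <> i4.+1 :> nat /\ i4 <> i1.+1 :> nat.

Definition twisted_baxter n (x : 'S_n) : Prop :=
  four_one_nonadjacent p2413 x /\ four_one_nonadjacent p3412 x.

Definition is_class n (R : 'S_n -> 'S_n -> Prop) (A : {set 'S_n}) : Prop :=
  exists a, forall x, x \in A <-> R a x.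

Definition quot_le n (A B : {set 'S_n}) : Prop :=
  exists x y, [/\ x \in A, y \in B & weak_le x y].

Definition C_9p7 : seq {k : nat & 'S_k} :=
  [:: existT _ 4 p3412; existT _ 4 p2413].

(* Main.v *)
Require Import Defs.
From mathcomp Require Import all_boot all_order all_fingroup zify.
From Stdlib Require Import Classical ProofIrrelevance IndefiniteDescription.
Set Implicit Arguments. Unset Strict Implicit. Unset Printing Implicit Defensive.

Section Basics.
Variable n : nat.
Implicit Types x y z : 'S_n.

Definition bef x (u v : 'I_n) := ((x^-1)%g u < (x^-1)%g v)%N.

Lemma befE x u v : bef x u v = ((x^-1)%g u < (x^-1)%g v)%N. Proof. by []. Qed.

Lemma bef_irr x u : bef x u u = false. Proof. by rewrite /bef ltnn. Qed.

Lemma bef_total x u v : u != v -> bef x u v = ~~ bef x v u.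
Proof.
move=> uv; rewrite /bef -leqNgt ltn_neqAle.
suff -> : ((x^-1)%g u != (x^-1)%g v :> nat) by [].
by apply: contra uv => /eqP/val_inj/perm_inj ->.
Qed.

Lemma bef_trans x u v w : bef x u v -> bef x v w -> bef x u w.
Proof. exact: ltn_trans. Qed.

Lemma inv_setE x a b : ((a, b) \in inv_set x) = (a < b)%N && bef x b a.
Proof. by rewrite inE. Qed.

Lemma weak_leP x y :
  weak_le x y <-> (forall a b : 'I_n, (a < b)%N -> bef x b a -> bef y b a).
Proof.
split => [H a b ab bx|H].
  by have := subsetP H (a, b); rewrite !inv_setE ab bx => /(_ isT).
apply/subsetP => -[a b]; rewrite !inv_setE => /andP[ab bx].
by rewrite ab (H _ _ ab bx).
Qed.

Lemma weak_le_refl x : weak_le x x. Proof. exact: subxx. Qed.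
Lemma weak_le_trans x y z : weak_le x y -> weak_le y z -> weak_le x z.
Proof. exact: subset_trans. Qed.

Lemma card_ltk (k : nat) : (k <= n)%N -> #|[set i : 'I_n | (i < k)%N]| = k.
Proof.
move=> kn.
have -> : [set i : 'I_n | (i < k)%N] = widen_ord kn @: 'I_k.
  apply/setP => i; rewrite inE; apply/idP/imsetP => [ik|[j _ ->]] //.
  by exists (Ordinal ik) => //; apply: val_inj.
  exact: (ltn_ord j).
have inj : injective (widen_ord kn).
  by move=> i j E; apply: val_inj; exact: (congr1 val E).
by rewrite (card_imset _ inj) card_ord.
Qed.

Lemma perm_rank (s : 'S_n) v : s v = #|[set u | (s u < s v)%N]| :> nat.
Proof.
have -> : [set u | (s u < s v)%N] = s @^-1: [set i : 'I_n | (i < s v)%N].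
  by apply/setP => u; rewrite !inE.
by rewrite card_preimset ?card_ltk //; [apply: ltnW | apply: perm_inj].
Qed.

Lemma bef_eq_perm x y : (forall u v, bef x u v = bef y u v) -> x = y.
Proof.
move=> H; suff E : (x^-1)%g = (y^-1)%g by rewrite -(invgK x) E invgK.
apply/permP => v; apply: val_inj => /=.
rewrite perm_rank [in RHS]perm_rank; apply: eq_card => u.
by rewrite !inE -!befE H.
Qed.

Lemma weak_le_anti x y : weak_le x y -> weak_le y x -> x = y.
Proof.
move=> /weak_leP H1 /weak_leP H2; apply: bef_eq_perm => u v.
have [->|uv] := eqVneq u v; first by rewrite !bef_irr.
case: (ltngtP u v) => [l|l|/val_inj E]; last by rewrite E eqxx in uv.
  rewrite (bef_total _ uv) [in RHS](bef_total _ uv).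
  by congr negb; apply/idP/idP; [apply: H1|apply: H2].
by apply/idP/idP; [apply: H1|apply: H2].
Qed.

End Basics.

Lemma ord_neq n (a b : 'I_n) : a <> b -> (a : nat) <> b.
Proof. by move=> H E; apply: H; apply: val_inj. Qed.

Ltac ordnat := repeat match goal with
 | H : @eq ?T ?a _ |- _ => lazymatch T with nat => fail | bool => fail | _ => move/(congr1 (@nat_of_ord _)): H => H end
 | H : ~ (@eq ?T _ _) |- _ => lazymatch T with nat => fail | bool => fail | _ => move/ord_neq: H => H end
 end.

Lemma tperm_lt n (i j p q : 'I_n) : j = i.+1 :> nat ->
  ~ ((p : nat) = i /\ (q : nat) = j) -> ~ ((p : nat) = j /\ (q : nat) = i) ->
  (tperm i j p < tperm i j q)%N = (p < q)%N.
Proof.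
move=> ij H1 H2.
case: tpermP => [E1|E1|N1 N2]; case: tpermP => [E3|E3|N3 N4];
  ordnat; lia.
Qed.

Section Theta.
Variable n : nat.
Implicit Types x y z : 'S_n.

Definition G x (t : 'I_n) (lo hi : nat) (d : bool) :=
  [forall c : 'I_n, ((lo <= c) && (c < hi))%N ==> (if d then bef x t c else bef x c t)].

Definition Theta x y :=
  [forall t : 'I_n, forall lo : 'I_n.+1, forall hi : 'I_n.+1, forall d : bool,
     ((hi == t :> nat) || (lo == t.+1 :> nat)) ==> (G x t lo hi d == G y t lo hi d)].

Lemma G_clamp x t lo hi d : G x t lo hi d = G x t (minn lo n) (minn hi n) d.
Proof.
apply: eq_forallb => c; congr (_ ==> _); have := ltn_ord c; lia.
Qed.

Lemma ThetaP x y : Theta x y <->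
  (forall (t : 'I_n) (lo hi : nat) (d : bool), (hi = t :> nat \/ lo = t.+1) -> G x t lo hi d = G y t lo hi d).
Proof.
split => [/forallP H t lo hi d Hc|H].
  rewrite G_clamp [RHS]G_clamp.
  have Hlo : (minn lo n < n.+1)%N by lia.
  have Hhi : (minn hi n < n.+1)%N by lia.
  have := H t => /forallP /(_ (Ordinal Hlo)) /forallP /(_ (Ordinal Hhi)) /forallP /(_ d).
  move=> /implyP Hi.
  have Hcond : (minn hi n == t) || (minn lo n == t.+1) by have := ltn_ord t; lia.
  exact: (eqP (Hi Hcond)).
apply/forallP => t; apply/forallP => lo; apply/forallP => hi; apply/forallP => d.
by apply/implyP => /orP [] /eqP E; apply/eqP; apply: H; [left|right].
Qed.

Lemma Theta_refl x : Theta x x.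
Proof. by apply/ThetaP. Qed.
Lemma Theta_sym x y : Theta x y -> Theta y x.
Proof. by move/ThetaP => H; apply/ThetaP => t lo hi d /H ->. Qed.
Lemma Theta_trans x y z : Theta x y -> Theta y z -> Theta x z.
Proof. by move/ThetaP => H1 /ThetaP H2; apply/ThetaP => t lo hi d Hc; rewrite H1 ?H2. Qed.

Definition rv : 'S_n := perm (@rev_ord_inj n).
Definition revp x : 'S_n := (rv * x)%g.

Lemma rvV : (rv^-1)%g = rv.
Proof.
apply/permP => i; apply: (@perm_inj _ rv); rewrite -permM mulVg perm1.
by rewrite !permE rev_ordK.
Qed.

Lemma revpE x i : revp x i = x (rev_ord i).
Proof. by rewrite /revp permM permE. Qed.

Lemma bef_rev x u v : bef (revp x) u v = bef x v u.
Proof.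
rewrite /bef /revp invMg !permM rvV.
move: ((x^-1)%g u) ((x^-1)%g v) => a b; rewrite !permE /=.
have := ltn_ord a; have := ltn_ord b; lia.
Qed.

Lemma revpK x : revp (revp x) = x.
Proof. apply/permP => i; by rewrite !revpE rev_ordK. Qed.

Lemma rev_le x y : weak_le x y <-> weak_le (revp y) (revp x).
Proof.
rewrite !weak_leP; split => H a b ab.
  rewrite !bef_rev; have ba : a != b by apply/eqP => E; rewrite E ltnn in ab.
  rewrite !(bef_total _ ba); apply: contra; exact: H.
move=> hx; case hy: (bef y b a) => //.
have ab' : a != b by apply/eqP => E; rewrite E ltnn in ab.
by have := H a b ab; rewrite !bef_rev !(bef_total _ ab') hy hx => /(_ isT).
Qed.

Lemma G_rev x t lo hi d : G (revp x) t lo hi d = G x t lo hi (~~ d).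
Proof. by apply: eq_forallb => c; case: d; rewrite /= bef_rev. Qed.

Lemma Theta_rev x y : Theta x y -> Theta (revp x) (revp y).
Proof.
by move/ThetaP => H; apply/ThetaP => t lo hi d Hc; rewrite !G_rev H.
Qed.

Definition edge y x (e : 'I_n * 'I_n) :=
  inv_set x = e |: inv_set y /\ e \notin inv_set y.

Lemma edge_le y x e : edge y x e -> weak_le y x.
Proof. by rewrite /weak_le; case=> -> _; apply: subsetUr. Qed.

Lemma edge_cmp (R : 'S_n -> 'S_n -> Prop) : lattice_congruence R ->
  forall y1 x1 y2 x2 e, edge y1 x1 e -> edge y2 x2 e -> weak_le y1 y2 ->
  (R y1 x1 <-> R y2 x2).
Proof.
case=> _ _ _ Hj Hm y1 x1 y2 x2 e [E1 N1] [E2 N2] le12.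
have lx : weak_le x1 x2 by rewrite /weak_le E1 E2; apply: setUS.
have J1 : is_join y1 y2 y2 by split => //; apply: weak_le_refl.
have J2 : is_join x1 y2 x2.
  split => //; first exact: (edge_le (conj E2 N2)).
  move=> w h1 h2; rewrite /weak_le E2 subUset h2 andbT sub1set.
  by apply: (subsetP h1); rewrite E1 setU11.
have M1 : is_meet y2 x1 y1.
  split => //; first exact: (edge_le (conj E1 N1)).
  move=> w h1 h2; apply/subsetP => f hf.
  have := subsetP h2 f hf; rewrite E1 in_setU1 => /orP [/eqP Ef|//].
  by move: (subsetP h1 f hf); rewrite Ef (negbTE N2).
have M2 : is_meet x2 x1 x1 by split => //; apply: weak_le_refl.
split => H.
  exact: (Hj _ _ _ _ _ H J1 J2).
exact: (Hm _ _ _ _ _ H M1 M2).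
Qed.

End Theta.

Section Swap.
Variable n : nat.
Implicit Types x y z : 'S_n.

Definition swapx x (i j : 'I_n) : 'S_n := (tperm i j * x)%g.

Lemma swapxE x i j k : swapx x i j k = x (tperm i j k).
Proof. by rewrite permM. Qed.

Lemma swapxV x i j u : (swapx x i j)^-1%g u = tperm i j ((x^-1)%g u).
Proof. by rewrite /swapx invMg tpermV permM. Qed.

Lemma posE x u i : ((x^-1)%g u == i) = (u == x i).
Proof.
apply/eqP/eqP => [<-|->]; first by rewrite permKV.
by rewrite permK.
Qed.

Definition mvP x (i j c d : 'I_n) :=
  [/\ (j : nat) = i.+1, (c < i)%N, (j < d)%N,
      (x j < x c < x i)%N & (x j < x d < x i)%N].

Definition Bot x := forall i j c d, ~ mvP x i j c d.

Lemma bef_swap_other x (i j : 'I_n) u v : (j : nat) = i.+1 ->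
  ~ (u = x i /\ v = x j) -> ~ (u = x j /\ v = x i) ->
  bef (swapx x i j) u v = bef x u v.
Proof.
move=> ij H1 H2; rewrite /bef !swapxV; apply: tperm_lt => //.
  move=> [E1 E2]; apply: H1; split.
    by apply/eqP; rewrite -posE; apply/eqP/val_inj.
  by apply/eqP; rewrite -posE; apply/eqP/val_inj.
move=> [E1 E2]; apply: H2; split.
  by apply/eqP; rewrite -posE; apply/eqP/val_inj.
by apply/eqP; rewrite -posE; apply/eqP/val_inj.
Qed.

Lemma bef_swap_ij x (i j : 'I_n) : (j : nat) = i.+1 ->
  bef (swapx x i j) (x i) (x j) = false /\ bef x (x i) (x j).
Proof.
move=> ij; rewrite /bef !swapxV !permK tpermL tpermR; lia.
Qed.

Lemma swap_edge x (i j : 'I_n) : (j : nat) = i.+1 -> (x j < x i)%N ->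
  edge (swapx x i j) x (x j, x i).
Proof.
move=> ij lt; have [B1 B2] := bef_swap_ij x ij.
split; last by rewrite inv_setE B1 andbF.
apply/setP => -[u v]; rewrite in_setU1 !inv_setE.
have [/eqP E|NE] := boolP ((u, v) == (x j, x i)).
  by case: E => -> ->; rewrite lt B2.
rewrite /=; case uv: (u < v)%N => //=.
rewrite bef_swap_other //.
  move=> [E1 E2]; move/eqP: NE; apply; congr pair => //.
move=> [E1 E2]; subst; move: uv lt; lia.
Qed.

Lemma card_inv_swap x (i j : 'I_n) : (j : nat) = i.+1 -> (x j < x i)%N ->
  (#|inv_set (swapx x i j)| < #|inv_set x|)%N.
Proof.
move=> ij lt; have [-> N] := swap_edge ij lt.
by rewrite cardsU1 N.
Qed.

Lemma G_eq_pt x y t lo hi d :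
  (forall c : 'I_n, (lo <= c < hi)%N ->
     (if d then bef x t c else bef x c t) = (if d then bef y t c else bef y c t)) ->
  G x t lo hi d = G y t lo hi d.
Proof.
move=> H; apply: eq_forallb => c; case: (boolP (lo <= c < hi)%N) => //= h.
exact: H.
Qed.

Lemma G_false x t lo hi (d : bool) (c : 'I_n) : (lo <= c < hi)%N ->
  (if d then bef x t c else bef x c t) = false -> G x t lo hi d = false.
Proof.
move=> h E; apply/negbTE/forallP => H; have := H c.
by rewrite h E.
Qed.

Lemma swap_Theta x i j c d : mvP x i j c d -> Theta x (swapx x i j).
Proof.
case=> ij ci jd /andP[ac cb] /andP[ad db].
set x' := swapx x i j.
have Hc : forall u v, u != (x i) -> u != (x j) -> bef x' u v = bef x u v /\ bef x' v u = bef x v u.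
  move=> u v ub ua; split; apply: bef_swap_other => // -[E1 E2].
  - by move/eqP: ub.
  - by move/eqP: ua.
  - by move/eqP: ua; rewrite E2.
  - by move/eqP: ub; rewrite E2.
have Hcw : forall (w : 'I_n) u, w != i -> w != j ->
   bef x' (x w) u = bef x (x w) u /\ bef x' u (x w) = bef x u (x w).
  move=> w u wi wj; apply: Hc.
    by apply: contra wi => /eqP/perm_inj ->.
  by apply: contra wj => /eqP/perm_inj ->.
have ci' : c != i by apply/eqP => E; rewrite E ltnn in ci.
have cj' : c != j by apply/eqP => E; move: ci; rewrite E ij; lia.
have di' : d != i by apply/eqP => E; move: jd; rewrite E ij; lia.
have dj' : d != j by apply/eqP => E; rewrite E ltnn in jd.
have pxd : (x'^-1)%g (x d) = d by rewrite swapxV permK tpermD // eq_sym.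
have pxc : (x'^-1)%g (x c) = c by rewrite swapxV permK tpermD // eq_sym.
have pxb : (x'^-1)%g (x i) = j by rewrite swapxV permK tpermL.
have pxa : (x'^-1)%g (x j) = i by rewrite swapxV permK tpermR.
have befc0 : bef x (x c) (x i) by rewrite /bef !permK.
have befc : bef x (x c) (x i) /\ bef x' (x c) (x i).
  by split => //; rewrite (Hcw c (x i) ci' cj').1.
have befd0 : bef x (x j) (x d) by rewrite /bef !permK.
have befd : bef x (x j) (x d) /\ bef x' (x j) (x d).
  by split => //; rewrite (Hcw d (x j) di' dj').2.
apply/ThetaP => t lo hi dd Hth.
have [tb|tb] := eqVneq t (x i).
  case: (boolP (lo <= (x j))%N) => [loa|loa].
   case: Hth => [Eh|El]; last by move: El loa; rewrite tb; have := ltn_ord (x j); lia.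
   case: dd.
    rewrite (@G_false x t lo hi true (x c)); last first.
      - by rewrite /= tb bef_total ?befc.1 //; apply: contra ci' => /eqP/perm_inj ->.
      - by rewrite Eh tb; move: loa ac cb; lia.
    rewrite (@G_false x' t lo hi true (x c)) //.
      - by rewrite Eh tb; move: loa ac cb; lia.
      - by rewrite /= tb bef_total ?befc.2 //; apply: contra ci' => /eqP/perm_inj ->.
   rewrite (@G_false x t lo hi false (x d)); last first.
     - rewrite /= tb bef_total ?(bef_trans _ befd.1) //.
         by rewrite /bef !permK; lia.
       by apply: contra di' => /eqP/perm_inj ->.
     - by rewrite Eh tb; move: loa ad db; lia.
   rewrite (@G_false x' t lo hi false (x d)) //.
     - by rewrite Eh tb; move: loa ad db; lia.
     - rewrite /= tb bef_total ?negbK; first by rewrite /bef pxd pxb jd.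
       by apply: contra di' => /eqP/perm_inj ->.
  apply: G_eq_pt => u hu.
  have ua : u != (x j) by apply: contra loa => /eqP <-; case/andP: hu.
  have ub : u != (x i) by apply/eqP => E; move: hu Hth; rewrite E tb; lia.
  by case: dd => /=; rewrite ?(Hc u t ub ua).1 ?(Hc u t ub ua).2.
have [ta|ta] := eqVneq t (x j).
  case: (boolP ((x i) < hi)%N) => [bhi|bhi].
   case: Hth => [Eh|El]; first by move: Eh bhi; rewrite ta; move: ac cb; lia.
   case: dd.
    rewrite (@G_false x t lo hi true (x c)); last first.
      - rewrite /= ta bef_total ?(bef_trans befc.1) //.
          by rewrite /bef !permK; lia.
        by apply: contra cj' => /eqP/perm_inj ->.
      - by rewrite El ta; move: bhi ac cb; lia.
    rewrite (@G_false x' t lo hi true (x c)) //.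
      - by rewrite El ta; move: bhi ac cb; lia.
      - rewrite /= ta bef_total ?negbK; first by rewrite /bef pxc pxa ci.
        by apply: contra cj' => /eqP/perm_inj ->.
   rewrite (@G_false x t lo hi false (x d)); last first.
     - by rewrite /= ta bef_total ?befd.1 //; apply: contra dj' => /eqP/perm_inj ->.
     - by rewrite El ta; move: bhi ad db; lia.
   rewrite (@G_false x' t lo hi false (x d)) //.
     - by rewrite El ta; move: bhi ad db; lia.
     - by rewrite /= ta bef_total ?befd.2 //; apply: contra dj' => /eqP/perm_inj ->.
  apply: G_eq_pt => u hu.
  have ub : u != (x i) by apply: contra bhi => /eqP <-; case/andP: hu.
  have ua : u != (x j) by apply/eqP => E; move: hu Hth; rewrite E ta; lia.
  by case: dd => /=; rewrite ?(Hc u t ub ua).1 ?(Hc u t ub ua).2.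
apply: G_eq_pt => u hu.
by case: dd => /=; rewrite ?(Hc t u tb ta).1 ?(Hc t u tb ta).2.
Qed.

End Swap.

Lemma ivt (P : nat -> bool) i j : (i <= j)%N -> P i -> ~~ P j ->
  exists k, [/\ (i <= k < j)%N, P k & ~~ P k.+1].
Proof.
elim: j => [|j IH] ij Pi Pj.
  by move: ij; rewrite leqn0 => /eqP E; move: Pi Pj; rewrite E => ->.
case: (ltngtP i j.+1) ij => // [lt|E] _; last by move: Pi Pj; rewrite E => ->.
case Pj': (P j).
  by exists j; split => //; rewrite leqnn -ltnS lt.
have [k [h1 h2 h3]] := IH lt Pi (negbT Pj').
by exists k; split => //; lia.
Qed.

Section Mono.
Variable n : nat.
Implicit Types x y z m : 'S_n.

Lemma mono_core m y : Bot m ->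
  (forall a b : 'I_n, (a < b)%N -> G m b a b true -> bef y b a) ->
  (forall a b : 'I_n, (a < b)%N -> G m a a.+1 b.+1 false -> bef y b a) ->
  weak_le m y.
Proof.
move=> Bm H1 H2; apply/weak_leP.
suff S : forall k (a b : 'I_n), (b - a <= k)%N -> (a < b)%N -> bef m b a -> bef y b a.
  by move=> a b; apply: S (leqnn _).
elim=> [|k IH] a b hk ab bm; first by lia.
case g1: (G m b a b true); first exact: H1.
case g2: (G m a a.+1 b.+1 false); first exact: H2.
have [c [hc1 hc2]] : exists c : 'I_n, (a < c < b)%N /\ bef m c b.
  move/negbT: g1 => /forallPn [c]; rewrite negb_imply => /andP [hc bc].
  have cb : c != b by apply/eqP => E; move: hc; rewrite E; lia.
  have ca : (c : nat) != a by apply/eqP => E; move: bc; rewrite (val_inj E) bm.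
  by exists c; split; [lia | rewrite bef_total].
have [d [hd1 hd2]] : exists d : 'I_n, (a < d < b)%N /\ bef m a d.
  move/negbT: g2 => /forallPn [d]; rewrite negb_imply => /andP [hd bd].
  have ad : a != d by apply/eqP => E; move: hd; rewrite E; lia.
  have db : (d : nat) != b by apply/eqP => E; move: bd; rewrite (val_inj E) bm.
  by exists d; split; [lia | rewrite bef_total].
case: (boolP [exists e : 'I_n, (a < e < b)%N && bef m b e && bef m e a]).
  case/existsP => e /andP [/andP [he be] ea].
  apply: (@bef_trans _ y b e a).
    by apply: IH => //; lia.
  by apply: IH => //; lia.
move=> Hne; exfalso.
pose P (k : nat) := [exists q : 'I_n, (q == k :> nat) && (b <= m q)%N].
have Pb : P ((m^-1)%g b) by apply/existsP; exists ((m^-1)%g b); rewrite eqxx permKV leqnn.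
have Pa : ~~ P ((m^-1)%g a).
  apply/existsP => -[q /andP [/eqP qa bq]].
  by move: bq; rewrite (val_inj qa) permKV; lia.
have [k0 [hk0 Pk Pk1]] := ivt (ltnW bm) Pb Pa.
case/existsP: Pk => q /andP [/eqP qk bq].
have hq' : (k0.+1 < n)%N by have := ltn_ord ((m^-1)%g a); lia.
pose q' := Ordinal hq'.
have mq' : (m q' < b)%N.
  rewrite ltnNge; apply: contra Pk1 => h; apply/existsP; exists q'; by rewrite eqxx h.
have mq'a : (m q' <= a)%N.
  rewrite leqNgt; apply/negP => h; move/existsP: Hne; apply.
  exists (m q'); rewrite h mq' /= /bef permK.
  have q'a : q' != (m^-1)%g a.
    apply/eqP => E; move: h; rewrite E permKV; lia.
  have := ltn_ord q'; rewrite -(inj_eq val_inj) in q'a; move: q'a hk0; rewrite /= -qk; lia.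
apply: (Bm q q' ((m^-1)%g c) ((m^-1)%g d)); split.
- by rewrite /= qk.
- by move: hc2 hk0; rewrite /bef qk; lia.
- by move: hd2 hk0; rewrite /bef /= ; lia.
- by rewrite !permKV; apply/andP; split; lia.
- by rewrite !permKV; apply/andP; split; lia.
Qed.

Lemma G_mono_B x1 x2 (a b : 'I_n) : weak_le x1 x2 -> G x1 b a b true -> G x2 b a b true.
Proof.
move/weak_leP=> le /forallP H; apply/forallP => c; apply/implyP => hc.
by apply: le; [case/andP: hc | have := H c; rewrite hc].
Qed.

Lemma G_mono_A x1 x2 (a b : 'I_n) : weak_le x1 x2 ->
  G x1 a a.+1 b.+1 false -> G x2 a a.+1 b.+1 false.
Proof.
move/weak_leP=> le /forallP H; apply/forallP => c; apply/implyP => hc.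
by apply: le; [case/andP: hc | have := H c; rewrite hc].
Qed.

Lemma mono m1 x1 x2 y2 : Bot m1 -> Theta x1 m1 -> weak_le x1 x2 -> Theta x2 y2 ->
  weak_le m1 y2.
Proof.
move=> Bm /ThetaP T1 le /ThetaP T2; apply: mono_core => // a b ab g.
  have : G y2 b a b true.
    by rewrite -T2; [apply: (G_mono_B le); rewrite T1 //; left | left].
  by move/forallP/(_ a); rewrite leqnn ab.
have : G y2 a a.+1 b.+1 false.
  by rewrite -T2; [apply: (G_mono_A le); rewrite T1 //; right | right].
by move/forallP/(_ b); rewrite ab leqnn.
Qed.

Lemma bottom_exists (R : 'S_n -> 'S_n -> Prop) :
  (forall x, R x x) -> (forall x y z, R x y -> R y z -> R x z) ->
  (forall x i j c d, mvP x i j c d -> R x (swapx x i j)) ->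
  forall x, exists m, Bot m /\ R x m.
Proof.
move=> Rr Rt Rm.
suff S : forall k x, (#|inv_set x| < k)%N -> exists m, Bot m /\ R x m.
  by move=> x; apply: (S #|inv_set x|.+1).
elim=> // k IH x hk.
case: (classic (Bot x)) => [B|NB]; first by exists x.
have [i [j [c [d M]]]] : exists i j c d, mvP x i j c d.
  apply: NNPP => H; apply: NB => i j c d M; apply: H; by exists i, j, c, d.
case: (M) => ij _ _ /andP [h1 h2] _.
have lt := card_inv_swap ij (ltn_trans h1 h2).
have [m [Bm Rm']] := IH (swapx x i j) (leq_trans lt hk).
by exists m; split => //; apply: Rt Rm'; apply: Rm M.
Qed.

Lemma bottom_Theta x : exists m, Bot m /\ Theta x m.
Proof.
apply: (@bottom_exists (fun a b => Theta a b)) => [a|a b c|a i j c d]; [exact: Theta_refl | exact: Theta_trans | exact: swap_Theta].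
Qed.


Lemma bot_min m y : Bot m -> Theta m y -> weak_le m y.
Proof. move=> B T; exact: (mono B (Theta_refl m) (weak_le_refl m) T). Qed.

Lemma bot_unique m1 m2 : Bot m1 -> Bot m2 -> Theta m1 m2 -> m1 = m2.
Proof.
move=> B1 B2 T; apply: weak_le_anti; first exact: bot_min.
by apply: bot_min => //; exact: Theta_sym.
Qed.

Lemma Theta_meet x y z m m' : Theta x y -> is_meet x z m -> is_meet y z m' -> Theta m m'.
Proof.
move=> Txy [m1 m2 m3] [m1' m2' m3'].
have [bm [Bm Tm]] := bottom_Theta m.
have [bm' [Bm' Tm']] := bottom_Theta m'.
have h1 : weak_le bm m'.
  apply: m3'; first exact: (mono Bm Tm m1 Txy).
  exact: (mono Bm Tm m2 (Theta_refl z)).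
have h2 : weak_le bm' m.
  apply: m3; first exact: (mono Bm' Tm' m1' (Theta_sym Txy)).
  exact: (mono Bm' Tm' m2' (Theta_refl z)).
have e1 : weak_le bm bm' := mono Bm (Theta_refl bm) h1 Tm'.
have e2 : weak_le bm' bm := mono Bm' (Theta_refl bm') h2 Tm.
have E := weak_le_anti e1 e2.
by apply: Theta_trans Tm _; rewrite E; apply: Theta_sym.
Qed.

Lemma is_join_rev x y j : is_join x y j -> is_meet (revp x) (revp y) (revp j).
Proof.
case=> h1 h2 h3; split; try by rewrite -rev_le.
move=> w w1 w2; rewrite -(revpK w) -rev_le; apply: h3; rewrite rev_le revpK //.
Qed.

Lemma Theta_join x y z j j' : Theta x y -> is_join x z j -> is_join y z j' -> Theta j j'.
Proof.
move=> T J1 J2; have := Theta_meet (Theta_rev T) (is_join_rev J1) (is_join_rev J2).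
by move/Theta_rev; rewrite !revpK.
Qed.

Lemma Theta_LC : lattice_congruence (fun x y : 'S_n => Theta x y).
Proof.
split.
- exact: Theta_refl.
- exact: Theta_sym.
- exact: Theta_trans.
- exact: Theta_join.
- exact: Theta_meet.
Qed.
End Mono.

Definition f2413 (i : 'I_4) : 'I_4 := inord (nth 0%N [:: 1; 3; 0; 2]%N i).
Definition f3412 (i : 'I_4) : 'I_4 := inord (nth 0%N [:: 2; 3; 0; 1]%N i).
Lemma f2413_inj : injective f2413.
Proof.
have B : forall i : 'I_4, (nth 0%N [:: 1; 3; 0; 2]%N i < 4)%N by case=> [[|[|[|[|?]]]] ?].
move=> i j; rewrite /f2413 => /(congr1 (@nat_of_ord 4)); rewrite !inordK ?B // => E; apply: val_inj.
by case: i j E => [[|[|[|[|?]]]] ?] [[|[|[|[|?]]]] ?].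
Qed.
Lemma f3412_inj : injective f3412.
Proof.
have B : forall i : 'I_4, (nth 0%N [:: 2; 3; 0; 1]%N i < 4)%N by case=> [[|[|[|[|?]]]] ?].
move=> i j; rewrite /f3412 => /(congr1 (@nat_of_ord 4)); rewrite !inordK ?B // => E; apply: val_inj.
by case: i j E => [[|[|[|[|?]]]] ?] [[|[|[|[|?]]]] ?].
Qed.

Lemma pos_val (s : seq nat) (f : 'I_4 -> 'I_4) (fi : injective f) :
  (forall i : 'I_4, val (f i) = nth 0%N s i) ->
  forall i : 'I_4, val (perm_of_seq 4 s i) = nth 0%N s i.
Proof.
move=> Hf; rewrite /perm_of_seq; case: pickP => [x /forallP H | H] /=.
  by move=> i; apply/eqP; apply: H.
exfalso; move: (H (perm fi)) => /negbT/negP; apply; apply/forallP => i.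
by rewrite permE Hf.
Qed.

Lemma p2413_val (i : 'I_4) : val (p2413 i) = nth 0%N [:: 1; 3; 0; 2]%N i.
Proof.
apply: (pos_val f2413_inj) => j; rewrite /= inordK //.
by case: j => [[|[|[|[|?]]]] ?].
Qed.
Lemma p3412_val (i : 'I_4) : val (p3412 i) = nth 0%N [:: 2; 3; 0; 1]%N i.
Proof.
apply: (pos_val f3412_inj) => j; rewrite /= inordK //.
by case: j => [[|[|[|[|?]]]] ?].
Qed.

Definition o0 : 'I_4 := @Ordinal 4 0 isT.
Definition o1 : 'I_4 := @Ordinal 4 1 isT.
Definition o2 : 'I_4 := @Ordinal 4 2 isT.
Definition o3 : 'I_4 := @Ordinal 4 3 isT.

Lemma pinv_val (y : 'S_4) (k : nat) (o : 'I_4) : (k < 4)%N -> val (y o) = k ->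
  (y^-1)%g (inord k) = o.
Proof.
move=> k4 E; apply: (@perm_inj _ y); rewrite permKV; apply: val_inj.
by rewrite /= inordK // E.
Qed.

Section TB.
Variable n : nat.
Implicit Types x : 'S_n.

Lemma Bot_fon (y : 'S_4) x : Bot x -> val (y o1) = 3 -> val (y o2) = 0 ->
  (0 < y o0 < 3)%N -> (0 < y o3 < 3)%N -> four_one_nonadjacent y x.
Proof.
move=> B y1 y2 y0 y3 f [finc fcmp] /=.
rewrite (pinv_val _ y1) // (pinv_val _ y2) //.
have f12 : (f o1 < f o2)%N by apply: finc.
split; last by lia.
move=> E; apply: (B (f o1) (f o2) (f o0) (f o3)); split => //.
- by apply: finc.
- by apply: finc.
- by rewrite !fcmp y1 y2; move: y0; lia.
- by rewrite !fcmp y1 y2; move: y3; lia.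
Qed.

Lemma Bot_TB x : Bot x -> twisted_baxter x.
Proof.
move=> B; split; apply: Bot_fon => //; rewrite ?p2413_val ?p3412_val //.
Qed.

Definition fmv (i j c d : 'I_n) (k : 'I_4) : 'I_n :=
  match nat_of_ord k with 0 => c | 1 => i | 2 => j | _ => d end.

Lemma TB_Bot x : twisted_baxter x -> Bot x.
Proof.
move=> [T1 T2] i j c d M; case: (M) => ij ci jd /andP [h1 h2] /andP [h3 h4].
have finc : forall a b : 'I_4, (a < b)%N -> (fmv i j c d a < fmv i j c d b)%N.
  by move=> [[|[|[|[|?]]]] ?] [[|[|[|[|?]]]] ?]; rewrite /fmv /=; lia.
have cd : x c != x d.
  apply/eqP => /perm_inj E; move: ci jd; rewrite E; lia.
case: (ltngtP (x c) (x d)) => [lt|gt|/val_inj/eqP]; last by rewrite (negbTE cd).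
  have O : occurrence p2413 x (fmv i j c d).
    split => // -[[|[|[|[|?]]]] ?] [[|[|[|[|?]]]] ?]; rewrite /fmv /=; rewrite ?p2413_val /=; lia.
  have := T1 _ O => /=.
  rewrite (pinv_val _ (p2413_val o1)) // (pinv_val _ (p2413_val o2)) //=.
  by case; rewrite ij.
have O : occurrence p3412 x (fmv i j c d).
  split => // -[[|[|[|[|?]]]] ?] [[|[|[|[|?]]]] ?]; rewrite /fmv /=; rewrite ?p3412_val /=; lia.
have := T2 _ O => /=.
rewrite (pinv_val _ (p3412_val o1)) // (pinv_val _ (p3412_val o2)) //=.
by case; rewrite ij.
Qed.

End TB.

Definition rk N (S : {set 'I_N}) (k : nat) := #|[set w in S | (w < k)%N]|.

Lemma rk_le N (S : {set 'I_N}) k1 k2 : (k1 <= k2)%N -> (rk S k1 <= rk S k2)%N.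
Proof.
move=> le; apply: subset_leq_card; apply/subsetP => w; rewrite !inE.
by case/andP=> -> /leq_trans; apply.
Qed.

Lemma rk_lt N (S : {set 'I_N}) (c : 'I_N) k : c \in S -> (c < k)%N ->
  (rk S c < rk S k)%N.
Proof.
move=> cS ck; rewrite /rk.
apply: (@leq_trans #|c |: [set w in S | (w < c)%N]|).
  by rewrite cardsU1 !inE ltnn andbF.
apply: subset_leq_card; apply/subsetP => w; rewrite !inE.
case/orP => [/eqP ->|/andP [-> wc]]; first by rewrite cS ck.
exact: ltn_trans wc ck.
Qed.

Lemma rk_mono N (S : {set 'I_N}) (c : 'I_N) k : c \in S ->
  ((k <= c) = (rk S k <= rk S c))%N /\ ((c < k) = (rk S c < rk S k))%N.
Proof.
move=> cS; case: (leqP k c) => h.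
  by split; [rewrite (rk_le S h) | rewrite ltnNge (rk_le S h)].
by split; [rewrite leqNgt (rk_lt cS h) | rewrite (rk_lt cS h)].
Qed.

Lemma rkS N (S : {set 'I_N}) (c : 'I_N) : c \in S -> rk S c.+1 = (rk S c).+1.
Proof.
move=> cS; rewrite /rk.
have -> : [set w in S | (w < c.+1)%N] = c |: [set w in S | (w < c)%N].
  apply/setP => w; rewrite !inE ltnS leq_eqVlt.
  have [->|ne] := eqVneq w c; first by rewrite !eqxx cS.
  have ne' : (w == c :> nat) = false by apply/negbTE; apply: contra ne => /eqP/val_inj ->.
  by rewrite ne'.
by rewrite cardsU1 inE ltnn andbF add1n.
Qed.

Definition cmpx n (x : 'S_n) (t c : 'I_n) (d : bool) :=
  if d then bef x t c else bef x c t.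

Section Block.
Variables (N m : nat) (x : 'S_N) (w : 'S_m) (e : 'I_m -> 'I_N) (S : {set 'I_N}).
Hypothesis e_mono : forall i j, (e i < e j)%N = (i < j)%N.
Hypothesis S_def : forall c, (c \in S) = [exists i, (x^-1)%g c == e i].
Hypothesis w_cmp : forall i j, (x (e i) < x (e j))%N = (w i < w j)%N.

Lemma e_inj : injective e.
Proof.
move=> i j E; apply: val_inj; case: (ltngtP i j) => // h.
  by have := e_mono i j; rewrite h E ltnn.
by have := e_mono j i; rewrite h E ltnn.
Qed.

Lemma xe_inS i : x (e i) \in S.
Proof. by rewrite S_def; apply/existsP; exists i; rewrite permK. Qed.

Lemma inS_xe c : c \in S -> exists i, c = x (e i).
Proof.
rewrite S_def => /existsP [i /eqP E]; exists i.
by rewrite -E permKV.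
Qed.

Lemma w_rank i : (w i : nat) = rk S (x (e i)).
Proof.
rewrite perm_rank /rk.
have -> : [set w0 in S | (w0 < x (e i))%N] =
          [set x (e j) | j in [set j | (w j < w i)%N]].
  apply/setP => c; rewrite inE; apply/andP/imsetP => [[cS lt]|[j]].
    have [j Ej] := inS_xe cS; exists j => //; by rewrite inE -w_cmp -Ej.
  by rewrite inE -w_cmp => lt ->; rewrite xe_inS.
rewrite card_imset //; move=> i1 i2 /perm_inj; exact: e_inj.
Qed.

Lemma block_G i lo hi (d : bool) :
  G x (x (e i)) lo hi d =
  G w (w i) (rk S lo) (rk S hi) d &&
  [forall c : 'I_N, ((lo <= c < hi)%N && (c \notin S)) ==> cmpx x (x (e i)) c d].
Proof.
have split1 : G x (x (e i)) lo hi d =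
   [forall c : 'I_N, ((lo <= c < hi)%N && (c \in S)) ==> cmpx x (x (e i)) c d] &&
   [forall c : 'I_N, ((lo <= c < hi)%N && (c \notin S)) ==> cmpx x (x (e i)) c d].
  apply/forallP/andP => [H|[/forallP H1 /forallP H2] c].
    by split; apply/forallP => c; apply/implyP => /andP [h _]; have := H c; rewrite h.
  apply/implyP => h; case: (boolP (c \in S)) => cS.
    by have := H1 c; rewrite h cS.
  by have := H2 c; rewrite h cS.
rewrite {}split1; congr andb.
apply/forallP/forallP => H k.
  apply/implyP => hk; pose j := (w^-1)%g k.
  have := H (x (e j)); rewrite xe_inS andbT.
  have [r1 r2] := rk_mono lo (xe_inS j); have [r3 r4] := rk_mono hi (xe_inS j).
  rewrite r1 r4 -w_rank /j permKV hk /= /cmpx /bef !permK !e_mono.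
  by rewrite -(permKV w k) -/j !permK; case: (d).
apply/implyP => /andP [hr cS]; have [j Ej] := inS_xe cS; rewrite Ej in hr *.
have := H (w j); have [r1 r2] := rk_mono lo (xe_inS j); have [r3 r4] := rk_mono hi (xe_inS j).
move: hr; rewrite r1 r4 -w_rank => -> /=.
by rewrite /cmpx /bef !permK !e_mono; case: (d).
Qed.

End Block.

Section Ins.
Variables (p q : nat) (Q : {set 'I_(p + q)}) (u : 'S_p) (v : 'S_q) (x : 'S_(p + q)).
Hypothesis cardQ : #|Q| = p.
Hypothesis phi : is_phi Q u v x.

Lemma phi_inQ c : (c \in Q) = ((x^-1)%g c < p)%N.
Proof.
case: phi => H1 _ _.
have sub : [set x (lshift q i) | i : 'I_p] \subset Q.
  by apply/subsetP => c' /imsetP [i _ ->]; apply: H1.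
have E : [set x (lshift q i) | i : 'I_p] = Q.
  apply/eqP; rewrite eqEcard sub cardQ card_imset ?card_ord ?leqnn //.
  by move=> i j /perm_inj /lshift_inj.
apply/idP/idP => [cQ|lt].
  rewrite -E in cQ; case/imsetP: cQ => i _ ->; rewrite permK /=; exact: (ltn_ord i).
rewrite -E; apply/imsetP; exists (Ordinal lt) => //.
have -> : lshift q (Ordinal lt) = (x^-1)%g c by apply: val_inj.
by rewrite permKV.
Qed.

Lemma phi_Sl c : (c \in Q) = [exists i, (x^-1)%g c == lshift q i].
Proof.
rewrite phi_inQ; apply/idP/existsP => [lt|[i /eqP ->]]; last exact: (ltn_ord i).
by exists (Ordinal lt); apply/eqP/val_inj.
Qed.

Lemma phi_Sr c : (c \in ~: Q) = [exists j, (x^-1)%g c == rshift p j].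
Proof.
rewrite inE phi_inQ -leqNgt; apply/idP/existsP => [le|[j /eqP ->]].
  have lt : ((x^-1)%g c - p < q)%N by have := ltn_ord ((x^-1)%g c); lia.
  by exists (Ordinal lt); apply/eqP/val_inj => /=; lia.
by rewrite /= leq_addr.
Qed.

Lemma lshift_mono (i j : 'I_p) : (@lshift p q i < lshift q j)%N = (i < j)%N. Proof. by []. Qed.
Lemma rshift_mono (i j : 'I_q) : (@rshift p q i < rshift p j)%N = (i < j)%N.
Proof. by rewrite /= ltn_add2l. Qed.

Lemma G_left i lo hi d :
  G x (x (lshift q i)) lo hi d =
  G u (u i) (rk Q lo) (rk Q hi) d &&
  [forall c : 'I_(p + q), ((lo <= c < hi)%N && (c \notin Q)) ==> d].
Proof.
case: (phi) => _ H2 _.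
rewrite (block_G lshift_mono phi_Sl H2); congr andb.
apply: eq_forallb => c; case: (boolP ((lo <= c < hi)%N && (c \notin Q))) => //= /andP [_].
rewrite phi_inQ -leqNgt => le; rewrite /cmpx /bef permK.
have := ltn_ord i; case: d => /=; lia.
Qed.

Lemma G_right j lo hi d :
  G x (x (rshift p j)) lo hi d =
  G v (v j) (rk (~: Q) lo) (rk (~: Q) hi) d &&
  [forall c : 'I_(p + q), ((lo <= c < hi)%N && (c \in Q)) ==> ~~ d].
Proof.
case: (phi) => _ _ H3.
rewrite (block_G rshift_mono phi_Sr H3); congr andb.
apply: eq_forallb => c; rewrite inE negbK.
case: (boolP ((lo <= c < hi)%N && (c \in Q))) => //= /andP [_].
rewrite phi_inQ => lt; rewrite /cmpx /bef permK /=.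
case: d => /=; lia.
Qed.

Lemma rank_left i : (u i : nat) = rk Q (x (lshift q i)).
Proof. case: (phi) => _ H2 _; exact: (w_rank lshift_mono phi_Sl H2). Qed.
Lemma rank_right j : (v j : nat) = rk (~: Q) (x (rshift p j)).
Proof. case: (phi) => _ _ H3; exact: (w_rank rshift_mono phi_Sr H3). Qed.

Lemma left_ex c : c \in Q -> exists i, c = x (lshift q i).
Proof. rewrite phi_Sl => /existsP [i /eqP E]; exists i; by rewrite -E permKV. Qed.
Lemma right_ex c : c \notin Q -> exists j, c = x (rshift p j).
Proof.
rewrite -in_setC phi_Sr => /existsP [i /eqP E]; exists i; by rewrite -E permKV.
Qed.

End Ins.

Lemma Theta_ins p q (Q : {set 'I_(p + q)}) (u u' : 'S_p) (v v' : 'S_q) (x x' : 'S_(p + q)) :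
  #|Q| = p -> is_phi Q u v x -> is_phi Q u' v' x' -> Theta u u' -> Theta v v' ->
  Theta x x'.
Proof.
move=> cQ P1 P2 /ThetaP Tu /ThetaP Tv; apply/ThetaP => t lo hi d cond.
case: (boolP (t \in Q)) => tQ.
  have [i Ei] := left_ex cQ P1 tQ; have [i' Ei'] := left_ex cQ P2 tQ.
  rewrite {1}Ei {1}Ei' (G_left cQ P1) (G_left cQ P2); congr andb.
  have E : u i = u' i'.
    by apply: val_inj; rewrite /= (rank_left cQ P1) (rank_left cQ P2) -Ei -Ei'.
  rewrite E; apply: Tu; case: cond => [->|->].
    by left; rewrite -E (rank_left cQ P1) -Ei.
  by right; rewrite (rkS tQ) -E (rank_left cQ P1) -Ei.
have [i Ei] := right_ex cQ P1 tQ; have [i' Ei'] := right_ex cQ P2 tQ.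
have tQ' : t \in ~: Q by rewrite inE.
rewrite {1}Ei {1}Ei' (G_right cQ P1) (G_right cQ P2); congr andb.
have E : v i = v' i'.
  by apply: val_inj; rewrite /= (rank_right cQ P1) (rank_right cQ P2) -Ei -Ei'.
rewrite E; apply: Tv; case: cond => [->|->].
  by left; rewrite -E (rank_right cQ P1) -Ei.
by right; rewrite (rkS tQ') -E (rank_right cQ P1) -Ei.
Qed.

Section Dsum.
Variables (p q : nat).

Definition Q0 : {set 'I_(p + q)} := [set c : 'I_(p + q) | (c < p)%N].

Lemma dsum_l (u : 'S_p) (v : 'S_q) i : dsum u v (lshift q i) = lshift q (u i).
Proof. by rewrite /dsum permE /dsum_fun -[lshift q i]/(unsplit (inl i)) unsplitK. Qed.
Lemma dsum_r (u : 'S_p) (v : 'S_q) j : dsum u v (rshift p j) = rshift p (v j).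
Proof. by rewrite /dsum permE /dsum_fun -[rshift p j]/(unsplit (inr j)) unsplitK. Qed.

Lemma cardQ0 : #|Q0| = p.
Proof. by rewrite card_ltk // leq_addr. Qed.

Lemma dsum_phi (u : 'S_p) (v : 'S_q) : is_phi Q0 u v (dsum u v).
Proof.
split => [i|i j|i j]; rewrite ?dsum_l ?dsum_r ?inE //=.
by rewrite ltn_add2l.
Qed.

Lemma rkQ0 k : rk Q0 k = minn k p.
Proof.
rewrite /rk -(@card_ltk (p + q) (minn k p)); last by lia.
by apply: eq_card => c; rewrite !inE; lia.
Qed.

Lemma rkQ0c k : (k <= q)%N -> rk (~: Q0) (p + k) = k.
Proof.
move=> kq; rewrite /rk.
have -> : [set w in ~: Q0 | (w < p + k)%N] = @rshift p q @: [set j : 'I_q | (j < k)%N].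
  apply/setP => c; rewrite !inE; apply/andP/imsetP => [[h1 h2]|[j]].
    have lt : (c - p < q)%N by have := ltn_ord c; lia.
    exists (Ordinal lt); rewrite ?inE /=; [lia | apply: val_inj => /=; lia].
  by rewrite inE => jk ->; rewrite /= ltn_add2l jk; split => //; lia.
by rewrite card_imset ?card_ltk //; apply: rshift_inj.
Qed.

Lemma Theta_dsum (u u' : 'S_p) (v v' : 'S_q) :
  Theta (dsum u v) (dsum u' v') <-> Theta u u' /\ Theta v v'.
Proof.
split; last by case=> T1 T2; apply: (Theta_ins cardQ0 (dsum_phi u v) (dsum_phi u' v')).
move/ThetaP => T; split; apply/ThetaP => t lo hi d cond.
  rewrite G_clamp [RHS]G_clamp.
  pose i := (u^-1)%g t; pose i' := (u'^-1)%g t.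
  have EL := G_left cardQ0 (dsum_phi u v) i (minn lo p) (minn hi p) d.
  have EL' := G_left cardQ0 (dsum_phi u' v') i' (minn lo p) (minn hi p) d.
  rewrite !rkQ0 -!minnA !minnn /i /i' !permKV in EL EL'.
  have F : [forall c : 'I_(p + q), ((minn lo p <= c < minn hi p)%N && (c \notin Q0)) ==> d].
    by apply/forallP => c; rewrite inE; apply/implyP; lia.
  rewrite F !andbT in EL EL'; rewrite -EL -EL' !dsum_l !permKV; apply: T.
  by rewrite /=; have := ltn_ord t; lia.
rewrite G_clamp [RHS]G_clamp.
pose j := (v^-1)%g t; pose j' := (v'^-1)%g t.
have ER := G_right cardQ0 (dsum_phi u v) j (p + minn lo q) (p + minn hi q) d.
have ER' := G_right cardQ0 (dsum_phi u' v') j' (p + minn lo q) (p + minn hi q) d.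
rewrite !rkQ0c ?geq_minr // /j /j' !permKV in ER ER'.
have F : [forall c : 'I_(p + q), ((p + minn lo q <= c < p + minn hi q)%N && (c \in Q0)) ==> ~~ d].
  by apply/forallP => c; rewrite inE; apply/implyP; lia.
rewrite F !andbT in ER ER'; rewrite -ER -ER' !dsum_r !permKV; apply: T.
by rewrite /=; have := ltn_ord t; lia.
Qed.

End Dsum.

Definition ThetaF : Defs.family := fun n (x y : 'S_n) => Theta x y.
Arguments ThetaF : clear implicits.

Lemma ThetaF_H : H_family ThetaF.
Proof.
split.
- move=> n; exact: Theta_LC.
- move=> p q u u' v v'; exact: Theta_dsum.
- move=> p q Q u u' v v' x x' cQ P1 P2 T1 T2; exact: (Theta_ins cQ P1 P2 T1 T2).
Qed.

Lemma edge_covers n (y x : 'S_n) e : edge y x e -> covers y x.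
Proof.
move=> [E N]; split.
  split; first exact: (edge_le (conj E N)).
  by move=> yx; move: N; rewrite {1}yx E in_setU1 eqxx.
move=> z yz zx.
case: (boolP (e \in inv_set z)) => ez.
  right; apply: weak_le_anti => //; rewrite /weak_le E subUset sub1set ez; exact: yz.
left; apply: weak_le_anti => //; apply/subsetP => f fz.
have := subsetP zx f fz; rewrite E in_setU1 => /orP [/eqP Ef|//].
by move: ez; rewrite -Ef fz.
Qed.

Lemma mv_pat (y : 'S_4) : val (y o1) = 3 -> val (y o2) = 0 ->
  (0 < y o0 < 3)%N -> (0 < y o3 < 3)%N -> mvP y o1 o2 o0 o3.
Proof. by move=> h1 h2 h0 h3; split => //=; rewrite h1 h2; lia. Qed.

Lemma mv2413 : mvP p2413 o1 o2 o0 o3.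
Proof. by apply: mv_pat; rewrite ?p2413_val. Qed.
Lemma mv3412 : mvP p3412 o1 o2 o0 o3.
Proof. by apply: mv_pat; rewrite ?p3412_val. Qed.

Lemma contracts_mv n (R : 'S_n -> 'S_n -> Prop) (x : 'S_n) i j c d :
  mvP x i j c d -> R x (swapx x i j) -> contracts R x.
Proof.
move=> M H; exists (swapx x i j); split => //.
case: M => ij _ _ /andP [h1 h2] _.
exact: (edge_covers (swap_edge ij (ltn_trans h1 h2))).
Qed.

Lemma ThetaF_contracts c : List.In c C_9p7 -> contracts (ThetaF (projT1 c)) (projT2 c).
Proof.
case=> [<-|[<-|[]]] /=.
  apply: (contracts_mv mv3412); exact: swap_Theta mv3412.
apply: (contracts_mv mv2413); exact: swap_Theta mv2413.
Qed.

Lemma HC_Theta n (x y : 'S_n) : HC C_9p7 n x y -> Theta x y.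
Proof. move=> H; exact: (H ThetaF ThetaF_H ThetaF_contracts). Qed.

Section RPerm.
Variables (m : nat) (K : 'I_m -> nat).
Hypothesis Kinj : injective K.

Lemma rnk_lt (i : 'I_m) : (#|[set j | (K j < K i)%N]| < m)%N.
Proof.
have : (#|[set j | (K j < K i)%N]| <= #|[set~ i]|)%N.
  by apply: subset_leq_card; apply/subsetP => j; rewrite !inE; apply: contraTneq => ->; rewrite ltnn.
rewrite cardsC1 card_ord; have := ltn_ord i; lia.
Qed.

Definition rnk (i : 'I_m) : 'I_m := Ordinal (rnk_lt i).

Lemma rnk_mono i j : (rnk i < rnk j)%N = (K i < K j)%N.
Proof.
rewrite /=; case: (ltnP (K i) (K j)) => h.
  apply: proper_card; apply/properP; split.
    by apply/subsetP => k; rewrite !inE => /ltn_trans; apply.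
  by exists i; rewrite !inE ?ltnn.
rewrite ltnNge; apply/negbF/subset_leq_card/subsetP => k; rewrite !inE => hk.
exact: leq_trans hk h.
Qed.

Lemma rnk_inj : injective rnk.
Proof.
move=> i j E; apply: Kinj; case: (ltngtP (K i) (K j)) => // h.
  by have := rnk_mono i j; rewrite h E ltnn.
by have := rnk_mono j i; rewrite h E ltnn.
Qed.

Definition rperm : 'S_m := perm rnk_inj.

Lemma rpermE i j : (rperm i < rperm j)%N = (K i < K j)%N.
Proof. by rewrite !permE rnk_mono. Qed.
End RPerm.

Lemma xK_inj n m (x : 'S_n) (f : 'I_m -> 'I_n) : injective f ->
  injective (fun k => (x (f k) : nat)).
Proof. by move=> fi i j /val_inj /perm_inj /fi. Qed.

Lemma tperm_conj n (s : 'S_n) a b a' b' : s a' = a -> s b' = b ->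
  (tperm a' b' * s)%g = (s * tperm a b)%g.
Proof.
move=> <- <-; apply/permP => k; rewrite !permM.
by rewrite (inj_tperm _ _ _ (@perm_inj _ s)).
Qed.

Section Forcing.
Variable T : Defs.family.
Arguments T : clear implicits.
Hypothesis HT : H_family T.

Definition Claim m := forall (y : 'S_m) i j c d, mvP y i j c d -> T m y (swapx y i j).

Lemma T_refl n (x : 'S_n) : T n x x.
Proof. by case: HT => LCs _ _; case: (LCs n) => r _ _ _ _; apply: r. Qed.

Lemma A1 m : Claim m -> forall (x : 'S_(1 + m)) i j c d, mvP x i j c d -> (0 < c)%N ->
  T (1 + m) x (swapx x i j).
Proof.
move=> IH x i j c d M c0.
case: (M) => ij ci jd /andP [h1 h2] /andP [h3 h4].
have pr : forall k : 'I_(1 + m), (0 < k)%N -> (k.-1 < m)%N.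
  by move=> k; have := ltn_ord k; lia.
have i0 : (0 < i)%N by lia.
have j0 : (0 < j)%N by lia.
have d0 : (0 < d)%N by lia.
pose i1 := Ordinal (pr i i0); pose j1 := Ordinal (pr j j0).
pose c1 := Ordinal (pr c c0); pose d1 := Ordinal (pr d d0).
have Ei : rshift 1 i1 = i by apply: val_inj => /=; lia.
have Ej : rshift 1 j1 = j by apply: val_inj => /=; lia.
have Ec : rshift 1 c1 = c by apply: val_inj => /=; lia.
have Ed : rshift 1 d1 = d by apply: val_inj => /=; lia.
pose K := fun k : 'I_m => (x (rshift 1 k) : nat).
have Kinj : injective K := @xK_inj _ _ x _ (@rshift_inj 1 m).
pose v := rperm Kinj.
pose v' := swapx v i1 j1.
pose Q := [set x (lshift m ord0)] : {set 'I_(1 + m)}.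
have cQ : #|Q| = 1 by rewrite cards1.
have P1 : is_phi Q (1%g : 'S_1) v x.
  split => [k|k l|k l].
  - by rewrite (ord1 k) inE.
  - by rewrite (ord1 k) (ord1 l) !ltnn.
  - by rewrite rpermE.
have P2 : is_phi Q (1%g : 'S_1) v' (swapx x i j).
  split => [k|k l|k l].
  - rewrite (ord1 k) swapxE tpermD ?inE //.
      by apply/eqP => /(congr1 val) /=; lia.
    by apply/eqP => /(congr1 val) /=; lia.
  - by rewrite (ord1 k) (ord1 l) !ltnn.
  - rewrite /v' !swapxE -Ei -Ej -!(inj_tperm _ _ _ (@rshift_inj 1 m)).
    by rewrite rpermE.
have Tv : T m v v'.
  apply: (IH v i1 j1 c1 d1); split => /=; try lia.
    by rewrite !rpermE /K Ei Ej Ec; apply/andP; split.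
  by rewrite !rpermE /K Ei Ej Ed; apply/andP; split.
case: HT => _ _ Ins.
exact: (Ins 1 m Q 1%g 1%g v v' x (swapx x i j) cQ P1 P2 (T_refl _) Tv).
Qed.

Lemma A2 m : Claim m -> forall (x : 'S_(m + 1)) i j c d, mvP x i j c d -> (d < m)%N ->
  T (m + 1) x (swapx x i j).
Proof.
move=> IH x i j c d M dm.
case: (M) => ij ci jd /andP [h1 h2] /andP [h3 h4].
have im : (i < m)%N by lia.
have jm : (j < m)%N by lia.
have cm : (c < m)%N by lia.
pose i1 := Ordinal im; pose j1 := Ordinal jm.
pose c1 := Ordinal cm; pose d1 := Ordinal dm.
have Ei : lshift 1 i1 = i by apply: val_inj.
have Ej : lshift 1 j1 = j by apply: val_inj.
have Ec : lshift 1 c1 = c by apply: val_inj.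
have Ed : lshift 1 d1 = d by apply: val_inj.
pose K := fun k : 'I_m => (x (lshift 1 k) : nat).
have Kinj : injective K := @xK_inj _ _ x _ (@lshift_inj m 1).
pose u := rperm Kinj.
pose u' := swapx u i1 j1.
pose Q := [set x (lshift 1 k) | k : 'I_m].
have cQ : #|Q| = m.
  rewrite card_imset ?card_ord //; move=> k l /perm_inj; exact: lshift_inj.
have P1 : is_phi Q u (1%g : 'S_1) x.
  split => [k|k l|k l].
  - by apply: imset_f.
  - by rewrite rpermE.
  - by rewrite (ord1 k) (ord1 l) !ltnn.
have P2 : is_phi Q u' (1%g : 'S_1) (swapx x i j).
  split => [k|k l|k l].
  - rewrite swapxE -Ei -Ej -(inj_tperm _ _ _ (@lshift_inj m 1)); exact: imset_f.
  - rewrite /u' !swapxE -Ei -Ej -!(inj_tperm _ _ _ (@lshift_inj m 1)).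
    by rewrite rpermE.
  - by rewrite (ord1 k) (ord1 l) !ltnn.
have Tu : T m u u'.
  apply: (IH u i1 j1 c1 d1); split => /=; try lia.
    by rewrite !rpermE /K Ei Ej Ec; apply/andP; split.
  by rewrite !rpermE /K Ei Ej Ed; apply/andP; split.
case: HT => _ _ Ins.
exact: (Ins m 1 Q u u' 1%g 1%g x (swapx x i j) cQ P1 P2 Tu (T_refl _)).
Qed.

End Forcing.

Section Front.
Variables (m : nat) (z : 'I_m.+1).
Implicit Types x : 'S_m.+1.

Definition rhof (k : 'I_m.+1) : 'I_m.+1 :=
  inord (if k == z then 0 else if (k < z)%N then k.+1 else k).

Lemma rhof_val k : val (rhof k) = if k == z then 0 else if (k < z)%N then k.+1 else k.
Proof.
rewrite /rhof /= inordK //; have := ltn_ord k; have := ltn_ord z.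
case: eqP => // _; case: (ltnP k z) => /=; lia.
Qed.

Lemma rhof_inj : injective rhof.
Proof.
move=> k l E; apply: val_inj; have := congr1 val E; rewrite !rhof_val.
have h : forall a : 'I_m.+1, (a == z) = ((a : nat) == z) by move=> a; rewrite -(inj_eq val_inj).
rewrite !h; case: eqP => h1; case: eqP => h2; case: (ltnP k z) => h3; case: (ltnP l z) => h4 /=; lia.
Qed.

Definition rho : 'S_m.+1 := perm rhof_inj.

Lemma rhoE k : val (rho k) = if k == z then 0 else if (k < z)%N then k.+1 else k.
Proof. by rewrite permE rhof_val. Qed.

Lemma rho_lt k l : k != z -> l != z -> (rho k < rho l)%N = (k < l)%N.
Proof.
move=> kz lz; rewrite !rhoE (negbTE kz) (negbTE lz).
move: kz lz; rewrite -!(inj_eq val_inj) /= => /eqP kz /eqP lz.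
by case: (ltnP k z) => h1; case: (ltnP l z) => h2 /=; lia.
Qed.

Lemma rho_z_lt l : l != z -> (rho z < rho l)%N.
Proof.
move=> lz; rewrite !rhoE eqxx (negbTE lz).
move: lz; rewrite -(inj_eq val_inj) /= => /eqP lz.
by case: (ltnP l z) => /=; lia.
Qed.

Definition front (x : 'S_m.+1) : 'S_m.+1 := ((rho^-1) * x)%g.

Lemma frontE x k : front x (rho k) = x k.
Proof. by rewrite /front permM permK. Qed.

Lemma front_bef x u v : bef (front x) u v = (rho ((x^-1)%g u) < rho ((x^-1)%g v))%N.
Proof. by rewrite /bef /front invMg invgK permM [in X in (_ < X)%N]permM. Qed.

Lemma front_swap x i j : swapx (front x) (rho i) (rho j) = front (swapx x i j).
Proof.
rewrite /swapx /front !mulgA; congr (_ * _)%g.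
by apply: tperm_conj; rewrite permK.
Qed.

Lemma front_other x u v : u != x z -> v != x z -> bef (front x) u v = bef x u v.
Proof.
move=> uz vz; rewrite front_bef rho_lt //.
  by apply: contra uz => /eqP <-; rewrite permKV.
by apply: contra vz => /eqP <-; rewrite permKV.
Qed.

Lemma front_first x v : v != x z -> bef (front x) (x z) v.
Proof.
move=> vz; rewrite front_bef permK; apply: rho_z_lt.
by apply: contra vz => /eqP <-; rewrite permKV.
Qed.

Lemma front_max x : val (x z) = m -> weak_le x (front x).
Proof.
move=> xm; apply/weak_leP => a b ab bx.
have az : a != x z by apply/eqP => E; move: ab; rewrite E xm; have := ltn_ord b; lia.
case: (eqVneq b (x z)) => [->|bz]; first exact: front_first.
by rewrite front_other.
Qed.

Lemma front_min x : val (x z) = 0 -> weak_le (front x) x.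
Proof.
move=> x0; apply/weak_leP => a b ab bx.
have bz : b != x z by apply/eqP => E; move: ab; rewrite E x0.
case: (eqVneq a (x z)) => [E|az]; last by rewrite -front_other.
have := front_first bz; rewrite -E => h.
by move: (bef_trans h bx); rewrite bef_irr.
Qed.

End Front.

Lemma cover_unique n (gs g s : 'S_n) e : covers gs g -> edge s g e ->
  (forall z, weak_le z g -> e \in inv_set z -> z = g) -> gs = s.
Proof.
move=> [[gsg ne] H] [E N] U.
have eg : e \notin inv_set gs by apply/negP => /(U _ gsg) /ne.
have gss : weak_le gs s.
  apply/subsetP => f fgs; have := subsetP gsg f fgs; rewrite E in_setU1.
  by case/orP => // /eqP Ef; move: eg; rewrite -Ef fgs.
have sg : weak_le s g by exact: (edge_le (conj E N)).
case: (H s gss sg) => // Es; move: N; rewrite Es E in_setU1 eqxx.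
done.
Qed.

Lemma ord4_cases (k : 'I_4) : [\/ k = o0, k = o1, k = o2 | k = o3].
Proof.
case: k => [[|[|[|[|k]]]] Hk].
- by constructor 1; apply: val_inj.
- by constructor 2; apply: val_inj.
- by constructor 3; apply: val_inj.
- by constructor 4; apply: val_inj.
- by move: Hk; lia.
Qed.

Lemma x4_nth (x : 'S_4) (k : 'I_4) :
  (x k : nat) = nth 0%N [:: (x o0 : nat); (x o1 : nat); (x o2 : nat); (x o3 : nat)] k.
Proof. by case: (ord4_cases k) => ->. Qed.

Lemma p2413_nat (i : 'I_4) : (p2413 i : nat) = nth 0%N [:: 1; 3; 0; 2]%N i.
Proof. exact: p2413_val. Qed.
Lemma p3412_nat (i : 'I_4) : (p3412 i : nat) = nth 0%N [:: 2; 3; 0; 1]%N i.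
Proof. exact: p3412_val. Qed.

Lemma pat_cases (x : 'S_4) : mvP x o1 o2 o0 o3 -> x = p2413 \/ x = p3412.
Proof.
case=> _ _ _ /andP [a1 a2] /andP [a3 a4].
have ne : (x o0 : nat) != x o3.
  by apply/eqP => /val_inj /perm_inj.
have b0 := ltn_ord (x o0); have b1 := ltn_ord (x o1).
have b2 := ltn_ord (x o2); have b3 := ltn_ord (x o3).
have E1 : (x o1 : nat) = 3 by lia.
have E2 : (x o2 : nat) = 0 by lia.
case: (eqVneq (x o0 : nat) 1) => E0.
  have E3 : (x o3 : nat) = 2 by lia.
  left; apply/permP => k; apply: val_inj.
  by rewrite /= x4_nth p2413_nat E0 E1 E2 E3.
have E0' : (x o0 : nat) = 2 by lia.
have E3 : (x o3 : nat) = 1 by lia.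
right; apply/permP => k; apply: val_inj.
by rewrite /= x4_nth p3412_nat E0' E1 E2 E3.
Qed.

Lemma below_noninv n (z g : 'S_n) (p1 p2 : 'I_n) : weak_le z g -> (p1 < p2)%N -> (g p1 < g p2)%N ->
  bef z (g p1) (g p2).
Proof.
move/weak_leP => le h1 h2.
have ne : g p1 != g p2 by apply/eqP => /perm_inj E; move: h1; rewrite E ltnn.
rewrite bef_total //; apply/negP => /(le _ _ h2); rewrite /bef !permK.
by rewrite ltnNge ltnW.
Qed.

Lemma inv_of_pos n (z g : 'S_n) :
  (forall p1 p2 : 'I_n, (p1 < p2)%N -> (g p2 < g p1)%N -> bef z (g p1) (g p2)) -> weak_le g z.
Proof.
move=> H; apply/weak_leP => a b ab bg.
rewrite -(permKV g a) -(permKV g b) in ab *; apply: H => //.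
Qed.

Lemma join_irr2413 z : weak_le z p2413 -> (p2413 o2, p2413 o1) \in inv_set z -> z = p2413.
Proof.
move=> le; rewrite inv_setE => /andP [_ he].
apply: weak_le_anti => //; apply: inv_of_pos => p1 p2 h1 h2.
have N := below_noninv le.
case: (ord4_cases p1) h1 h2 => ->; case: (ord4_cases p2) => -> //= _;
  rewrite !p2413_nat //= => _.
- have N01 : bef z (p2413 o0) (p2413 o1) by apply: N; rewrite // !p2413_nat.
  exact: bef_trans N01 he.
- have N23 : bef z (p2413 o2) (p2413 o3) by apply: N; rewrite // !p2413_nat.
  exact: bef_trans he N23.
Qed.


Lemma join_irr3412 z : weak_le z p3412 -> (p3412 o2, p3412 o1) \in inv_set z -> z = p3412.
Proof.
move=> le; rewrite inv_setE => /andP [_ he].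
apply: weak_le_anti => //; apply: inv_of_pos => p1 p2 h1 h2.
have N := below_noninv le.
have N01 : bef z (p3412 o0) (p3412 o1) by apply: N; rewrite // !p3412_nat.
have N23 : bef z (p3412 o2) (p3412 o3) by apply: N; rewrite // !p3412_nat.
case: (ord4_cases p1) h1 h2 => ->; case: (ord4_cases p2) => -> //= _;
  rewrite !p3412_nat //= => _.
- exact: bef_trans N01 he.
- exact: bef_trans (bef_trans N01 he) N23.
- exact: bef_trans he N23.
Qed.

Section Force.
Variable T : Defs.family.
Arguments T : clear implicits.
Hypothesis HT : H_family T.
Hypothesis HC1 : contracts (T 4) p3412.
Hypothesis HC2 : contracts (T 4) p2413.

Lemma T_LC n : lattice_congruence (T n).
Proof. by case: HT. Qed.

Lemma T_sym n (x y : 'S_n) : T n x y -> T n y x.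
Proof. by case: (T_LC n) => _ s _ _ _; apply: s. Qed.

Lemma base_T (x : 'S_4) : mvP x o1 o2 o0 o3 -> T 4 x (swapx x o1 o2).
Proof.
case/pat_cases => ->.
  case: HC2 => gs [cov Tg].
  have lt : (p2413 o2 < p2413 o1)%N by rewrite !p2413_nat.
  have E : gs = swapx p2413 o1 o2.
    apply: (cover_unique cov (@swap_edge 4 p2413 o1 o2 (erefl _) lt)); exact: join_irr2413.
  by rewrite -E.
case: HC1 => gs [cov Tg].
have lt : (p3412 o2 < p3412 o1)%N by rewrite !p3412_nat.
have E : gs = swapx p3412 o1 o2.
  apply: (cover_unique cov (@swap_edge 4 p3412 o1 o2 (erefl _) lt)); exact: join_irr3412.
by rewrite -E.
Qed.

Lemma front_case m (IH : Claim T m) (x : 'S_m.+1) i j c d zz :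
  mvP x i j c d -> zz != i -> zz != j -> zz != c -> zz != d ->
  ((x zz : nat) = m \/ (x zz : nat) = 0) -> T m.+1 x (swapx x i j).
Proof.
move=> M zi zj zc zd hz; case: (M) => ij ci jd /andP[h1 h2] /andP[h3 h4].
pose xx := front zz x.
have ne : forall k : 'I_m.+1, zz != k -> (k == zz) = false /\ (zz : nat) <> k.
  move=> k zk; split; first by rewrite eq_sym (negbTE zk).
  by move=> E; move: zk; rewrite (val_inj E) eqxx.
have [ni ni'] := ne i zi; have [nj nj'] := ne j zj.
have Mx : mvP xx (rho zz i) (rho zz j) (rho zz c) (rho zz d).
  split.
  - rewrite !rhoE ni nj.
    by case: (ltnP i zz) => h5; case: (ltnP j zz) => h6 /=; lia.
  - by rewrite rho_lt // eq_sym.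
  - by rewrite rho_lt // eq_sym.
  - by rewrite /xx !frontE; apply/andP.
  - by rewrite /xx !frontE; apply/andP.
have c0 : (0 < rho zz c)%N.
  by have := rho_z_lt (_ : c != zz); rewrite rhoE eqxx; apply; rewrite eq_sym.
have A := A1 HT IH Mx c0.
rewrite /xx front_swap in A.
have lt : (x j < x i)%N := ltn_trans h1 h2.
have e1 := swap_edge ij lt.
have e2 : edge (front zz (swapx x i j)) (front zz x) (x j, x i).
  have ij' : (rho zz j : nat) = (rho zz i).+1 by case: Mx.
  have lt' : (front zz x (rho zz j) < front zz x (rho zz i))%N by rewrite !frontE.
  by have := swap_edge ij' lt'; rewrite front_swap !frontE.
have sz : swapx x i j zz = x zz by rewrite swapxE tpermD // eq_sym.
case: hz => hz.
  have le : weak_le (swapx x i j) (front zz (swapx x i j)) by apply: front_max; rewrite sz.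
  have := edge_cmp (T_LC m.+1) e1 e2 le => E.
  by apply: T_sym; apply/E; apply: T_sym.
have le : weak_le (front zz (swapx x i j)) (swapx x i j) by apply: front_min; rewrite sz.
have := edge_cmp (T_LC m.+1) e2 e1 le => E.
by apply: T_sym; apply/E; apply: T_sym.
Qed.


Lemma step m (IH : Claim T m) : Claim T m.+1.
Proof.
move=> x i j c d M.
case: (M) => ij ci jd /andP [h1 h2] /andP [h3 h4].
have A2' : forall (y : 'S_m.+1) i j c d, mvP y i j c d -> (d < m)%N ->
    T m.+1 y (swapx y i j).
  rewrite -[m.+1]addn1; exact: (A2 HT IH).
case c0: (0 < c)%N; first exact: (A1 HT IH M c0).
case dm: (d < m)%N; first exact: (A2' _ _ _ _ _ M dm).
have c00 : (c : nat) = 0 by lia.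
have dmm : (d : nat) = m by have := ltn_ord d; lia.
case: (eqVneq m 3) => [m3|m3].
  subst m.
  have Ei : i = o1 by apply: val_inj => /=; lia.
  have Ej : j = o2 by apply: val_inj => /=; lia.
  have Ec : c = o0 by apply: val_inj => /=; lia.
  have Ed : d = o3 by apply: val_inj => /=; lia.
  by move: M; rewrite Ei Ej Ec Ed; apply: base_T.
have m4 : (4 <= m)%N by lia.
have [z [zi zj zc zd Hz]] : exists z : 'I_m.+1,
    [/\ z != i, z != j, z != c, z != d & ((0 < z < i)%N || (j < z < m)%N)].
  have neq : forall (a b : 'I_m.+1), (a : nat) <> b -> a != b.
    by move=> a b h; apply/eqP => E; apply: h; rewrite E.
  case: (ltnP 1 i) => h.
    exists (inord 1); have V : ((inord 1 : 'I_m.+1) : nat) = 1 by rewrite inordK //; lia.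
    by split; try apply: neq; rewrite V; lia.
  exists (inord 3); have V : ((inord 3 : 'I_m.+1) : nat) = 3 by rewrite inordK //; lia.
  by split; try apply: neq; rewrite V; lia.
have xzi : x z != x i by apply: contra zi => /eqP /perm_inj ->.
have xzj : x z != x j by apply: contra zj => /eqP /perm_inj ->.
case: (boolP (x j < x z < x i)%N) => hz.
  case/orP: Hz => hz'.
    have Mz : mvP x i j z d.
      split; [exact: ij | by case/andP: hz' | exact: jd | exact: hz | by apply/andP].
    by apply: (A1 HT IH Mz); case/andP: hz'.
  have Mz : mvP x i j c z.
    split; [exact: ij | exact: ci | by case/andP: hz' | by apply/andP | exact: hz].
  by apply: (A2' _ _ _ _ _ Mz); case/andP: hz'.
have ne_of : forall (a b : 'I_m.+1), (x a : nat) <> x b -> a != b.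
  by move=> a b h; apply/eqP => E; apply: h; rewrite E.
case: (ltnP (x i) (x z)) => hzi.
  pose zz := (x^-1)%g ord_max.
  have vz : (x zz : nat) = m by rewrite permKV.
  have bz := ltn_ord (x z).
  apply: (front_case IH M (zz := zz)); try (apply: ne_of; rewrite vz; lia).
  by left.
have hzj : (x z < x j)%N.
  move: hz xzi xzj hzi; rewrite -!(inj_eq val_inj) /=; lia.
pose zz := (x^-1)%g ord0.
have vz : (x zz : nat) = 0 by rewrite permKV.
apply: (front_case IH M (zz := zz)); try (apply: ne_of; rewrite vz; lia).
by right.
Qed.

Lemma forcing n : Claim T n.
Proof.
elim: n => [|m IH]; first by move=> y [].
exact: step.
Qed.

End Force.

Lemma Theta_HC n (x y : 'S_n) : Theta x y -> HC C_9p7 n x y.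
Proof.
move=> Txy T HT HC.
have HC1 : contracts (T 4) p3412 := HC (existT _ 4 p3412) (or_introl erefl).
have HC2 : contracts (T 4) p2413 := HC (existT _ 4 p2413) (or_intror (or_introl erefl)).
have [r s t _ _] := T_LC HT n.
have B : forall a : 'S_n, exists m, Bot m /\ (T n a m /\ Theta a m).
  apply: (@bottom_exists n (fun a b => T n a b /\ Theta a b)).
  - by move=> a; split; [apply: r | apply: Theta_refl].
  - by move=> a b c [h1 h2] [h3 h4]; split; [apply: t h1 h3 | apply: Theta_trans h2 h4].
  - move=> a i j c d M; split; first exact: (forcing HT HC1 HC2 M).
    exact: swap_Theta M.
have [mx [Bx [Tx Thx]]] := B x.
have [my [By [Ty Thy]]] := B y.
have E : mx = my.
  apply: bot_unique => //.
  exact: Theta_trans (Theta_sym Thx) (Theta_trans Txy Thy).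
by apply: t Tx _; rewrite E; apply: s.
Qed.

Lemma HC_iff n (x y : 'S_n) : HC C_9p7 n x y <-> Theta x y.
Proof. by split; [apply: HC_Theta | apply: Theta_HC]. Qed.

Section Main.
Variable n : nat.
Definition R := HC C_9p7 n.
Definition Cls := {A : {set 'S_n} | is_class R A}.
Definition TBs := {x : 'S_n | twisted_baxter x}.

Lemma cls_mem (A : Cls) : exists a, forall x, x \in proj1_sig A <-> Theta a x.
Proof.
case: A => A [a Ha] /=; exists a => x; rewrite Ha; exact: HC_iff.
Qed.

Lemma cls_theta (A : Cls) x y : x \in proj1_sig A -> y \in proj1_sig A -> Theta x y.
Proof.
have [a Ha] := cls_mem A => /Ha hx /Ha hy.
exact: Theta_trans (Theta_sym hx) hy.
Qed.

Lemma ex_bot (A : Cls) : exists m, Bot m /\ m \in proj1_sig A.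
Proof.
have [a Ha] := cls_mem A; have [m [Bm Tm]] := bottom_Theta a.
by exists m; split => //; apply/Ha.
Qed.

Definition fbot (A : Cls) : 'S_n := proj1_sig (constructive_indefinite_description _ (ex_bot A)).

Lemma fbot_spec A : Bot (fbot A) /\ fbot A \in proj1_sig A.
Proof. exact: (proj2_sig (constructive_indefinite_description _ (ex_bot A))). Qed.

Definition f (A : Cls) : TBs := exist _ (fbot A) (Bot_TB (fbot_spec A).1).

Lemma g_class (x : 'S_n) : is_class R [set y | Theta x y].
Proof. by exists x => y; rewrite inE; split => /HC_iff. Qed.

Definition g (x : TBs) : Cls := exist _ _ (g_class (proj1_sig x)).

Lemma fK : cancel f g.
Proof.
move=> A; rewrite /g /f /=; case: A => A HA; apply: subset_eq_compat => /=.
have [Bm mA] := fbot_spec (exist _ A HA).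
apply/setP => y; rewrite inE; apply/idP/idP => [Ty|yA].
  have [a Ha] := cls_mem (exist _ A HA).
  apply/Ha; apply: Theta_trans Ty; exact/Ha.
exact: (cls_theta mA yA).
Qed.

Lemma gK : cancel g f.
Proof.
move=> [x Hx]; rewrite /f; apply: subset_eq_compat => /=.
have [Bm mA] := fbot_spec (g (exist _ x Hx)).
move: mA; rewrite /= inE => Tm.
exact: (bot_unique Bm (TB_Bot Hx) (Theta_sym Tm)).
Qed.

End Main.

Theorem theorem9p7 (n : nat) :
  exists f : {A : {set 'S_n} | is_class (HC C_9p7 n) A} ->
             {x : 'S_n | twisted_baxter x},
    bijective f /\
    forall A B : {A : {set 'S_n} | is_class (HC C_9p7 n) A},
      quot_le (proj1_sig A) (proj1_sig B) <->
      weak_le (proj1_sig (f A)) (proj1_sig (f B)).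
Proof.
exists (@f n); split; first by exists (@g n); [exact: fK | exact: gK].
move=> A B; split.
  case=> x [y [xA yB le]] /=.
  have [BA mA] := fbot_spec A; have [BB mB] := fbot_spec B.
  apply: (mono BA _ le).
    exact: (cls_theta xA mA).
  exact: (cls_theta yB mB).
move=> le; exists (fbot A), (fbot B); split => //.
  exact: (fbot_spec A).2.
exact: (fbot_spec B).2.
Qed.
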